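(* Let $X$ be a real linear metric space and let $f:X\to\mathbb{R}$ be a sublinear function. Then $f$ is bounded above on some shift-compact set in $X$ if and only if $f$ is continuous.
   Context: A real linear metric space is a real topological vector space whose topology is given by an invariant metric. A function $f:X\to\mathbb{R}$ is sublinear if $f(x+y)\le f(x)+f(y)$ for all $x,y\in X$ and $f(nx)=nf(x)$ for all $x\in X$, $n\in\mathbb{N}$. A set $A\subset X$ is shift-compact if for every sequence $(x_n)$ tending to $0$ in $X$ there exists $x\in X$ such that $\{n\in\mathbb{N}: x+x_n\in A\}$ is infinite. *)

(* Defs.v *)
From HB Require Import structures.
From mathcomp Require Import all_boot all_order all_algebra.
From mathcomp Require Import all_classical all_reals all_analysis.
Set Implicit Arguments. Unset Strict Implicit. Unset Printing Implicit Defensive.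
Import Order.TTheory GRing.Theory Num.Theory.
Import numFieldTopology.Exports.
Local Open Scope classical_set_scope.
Local Open Scope ring_scope.

Definition invariant_metric (R : realType) (X : topologicalLmodType R)
    (d : X -> X -> R) : Prop :=
  (forall x y, 0 <= d x y) /\
      (forall x y, d x y = 0 <-> x = y) /\
      (forall x y, d x y = d y x) /\
      (forall x y z, d x z <= d x y + d y z) /\
      (forall x y z, d (x + z) (y + z) = d x y) /\
      (forall x : X, nbhs x = filter_from [set e : R | 0 < e]
                                (fun e => [set y | d x y < e])).

Definition linear_metric_space (R : realType) (X : topologicalLmodType R) : Prop :=
  exists d : X -> X -> R, invariant_metric d.

Definition sublinear (R : realType) (X : topologicalLmodType R) (f : X -> R) : Prop :=
  (forall x y, f (x + y) <= f x + f y) /\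
  (forall (n : nat) (x : X), f (n.+1%:R *: x) = n.+1%:R * f x).

Definition shift_compact (R : realType) (X : topologicalLmodType R) (A : set X) : Prop :=
  forall u : nat -> X, u @ \oo --> (0 : X) ->
    exists x : X, infinite_set [set n : nat | A (x + u n)].

Definition bounded_above_on (R : realType) (X : Type) (f : X -> R) (A : set X) : Prop :=
  exists M : R, forall x, A x -> f x <= M.

(* Main.v *)
Require Import Defs.
From mathcomp Require Import all_boot all_order all_algebra.
From mathcomp Require Import all_classical all_reals all_analysis.
From mathcomp Require Import lra.
Import numFieldTopology.Exports.
Import Order.TTheory GRing.Theory Num.Theory.
Local Open Scope classical_set_scope.
Local Open Scope ring_scope.

Lemma nbhs_d (R : realType) (X : topologicalLmodType R) (d : X -> X -> R)
  (hd : invariant_metric d) (x : X) (U : set X) :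
  nbhs x U <-> exists2 e : R, 0 < e & forall y, d x y < e -> U y.
Proof.
case: hd => _ [_ [_ [_ [_ hn]]]]; rewrite hn; split.
  by case=> e e0 he; exists e => // y hy; apply: he.
by case=> e e0 he; exists e => // y hy; apply: he.
Qed.

Lemma scale0_cvg (R : realType) (X : topologicalLmodType R) (k : R) :
  (fun y : X => k *: y) @ (nbhs (0:X)) --> (0:X).
Proof.
have h := @continuous_comp X (R^o * X)%type X (fun y => (k, y))
  (fun z => z.1 *: z.2) 0.
have h1 : {for 0, continuous (fun y : X => (k, y) : R^o * X)}.
  by apply: (@cvg_pair _ _ _ _ (nbhs (k : R^o))); [exact: cvg_cst|exact: cvg_id].
have h2 : {for (k, 0), continuous (fun z : R^o * X => z.1 *: z.2)}.
  exact: scale_continuous.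
have := h h1 h2.
rewrite /prop_for /continuous_at /= scaler0; exact.
Qed.

Lemma infinite_large (S : set nat) : infinite_set S ->
  forall N, exists n, (N <= n)%N /\ S n.
Proof.
move=> hS N; apply: contrapT => hn; apply: hS.
apply: (@sub_finite_set _ _ `I_N); last exact: finite_II.
move=> n Sn /=; rewrite ltnNge; apply/negP => hN; apply: hn; by exists n.
Qed.

Theorem corollary1p10 (R : realType) (X : topologicalLmodType R) (f : X -> R) :
  linear_metric_space X -> sublinear f ->
  ((exists A : set X, shift_compact A /\ bounded_above_on f A) <-> continuous f).
Proof.
move=> [d hd] [hsub hlin]; split.
- move=> [A [hsc [M hM]]].
  have [hpos [hdeq [hsym [htri [hinv _]]]]] := hd.
  have key : forall e, 0 < e -> exists2 del : R, 0 < del &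
      forall h, d 0 h < del -> f h < e.
    move=> e e0; apply: contrapT => hneg.
    have H : forall n : nat, exists h,
        d 0 (n.+1%:R *: h) < n.+1%:R^-1 /\ e <= f h.
      move=> n.
      have : nbhs (0:X) [set y | d 0 (n.+1%:R *: y) < n.+1%:R^-1].
        have hc := @scale0_cvg R X (n.+1%:R).
        apply: (hc [set z | d 0 z < n.+1%:R^-1]); apply: (proj2 (@nbhs_d R X d hd 0 _)).
        by exists (n.+1%:R^-1) => //; rewrite invr_gt0 ltr0Sn.
      move/(@nbhs_d _ _ _ hd _ _) => [del del0 hdel].
      case: (pselect (exists h, d 0 h < del /\ e <= f h)) => [[h [h1 h2]]|nE].
        by exists h; split => //; exact: hdel.
      exfalso; apply: hneg; exists del => // h hh; rewrite ltNge; apply/negP => hf.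
      by apply: nE; exists h; split.
    have [g hg] := choice H.
    pose u n := n.+1%:R *: g n.
    have u0 : u @ \oo --> (0:X).
      move=> U /(@nbhs_d _ _ _ hd _ _) [r r0 hr].
      exists (Num.Def.trunc (r^-1)) => // n /= hn; apply: hr.
      have [h1 _] := hg n; apply: (lt_le_trans h1).
      have h3 : r^-1 < n.+1%:R.
        apply: (lt_le_trans (truncnS_gt _)); by rewrite ler_nat ltnS.
      rewrite -(invrK r) lef_pV2 ?posrE ?invr_gt0 ?ltr0Sn //; exact: ltW.
    have [x hx] := hsc u u0.
    pose N := Num.Def.trunc ((M + f (- x)) / e).
    have hN : M + f (- x) < N.+1%:R * e.
      by rewrite -ltr_pdivrMr //; exact: truncnS_gt.
    have [n [hNn Sn]] := @infinite_large _ hx N.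
    have h1 := hM _ Sn.
    have e1 : u n = (x + u n) + - x by rewrite addrC addKr.
    have h2 : f (u n) <= f (x + u n) + f (- x) by rewrite {1}e1; exact: hsub.
    have h3 : f (u n) = n.+1%:R * f (g n) by rewrite /u hlin.
    have h4 : n.+1%:R * e <= n.+1%:R * f (g n).
      by rewrite ler_wpM2l // (hg n).2.
    have h5 : N.+1%:R * e <= n.+1%:R * e.
      by rewrite ler_wpM2r ?(ltW e0) // ler_nat ltnS.
    lra.
  move=> x; apply/cvgrPdist_lt => e e0.
  have [del del0 hdel] := key e e0.
  apply/(@nbhs_d _ _ _ hd _ _); exists del => // y hy.
  have d1 : d 0 (y - x) = d x y by rewrite -(hinv 0 (y - x) x) add0r subrK.
  have d2 : d 0 (x - y) = d x y.
    by rewrite -d1 -(hinv 0 (x - y) (y - x)) add0r addrA subrK subrr hsym.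
  have f1 : f (y - x) < e by apply: hdel; rewrite d1.
  have f2 : f (x - y) < e by apply: hdel; rewrite d2.
  have g1 : f y <= f x + f (y - x).
    by have := hsub x (y - x); rewrite addrC subrK.
  have g2 : f x <= f y + f (x - y).
    by have := hsub y (x - y); rewrite addrC subrK.
  rewrite ltr_distlC; apply/andP; split; lra.
- move=> fc; exists [set y | f y <= f 0 + 1]; split; last by exists (f 0 + 1).
  move=> u u0; exists 0.
  have fu : (f \o u) @ \oo --> f 0.
    by apply: cvg_comp; [exact: u0 | exact: fc].
  move/cvgrPdist_lt: fu => /(_ 1 ltr01) [N _ hN] hfin.
  have : finite_set [set n : nat | (N <= n)%N].
    apply: sub_finite_set hfin => n /= hn; rewrite add0r.
    have := hN n hn => /=; rewrite ltr_distlC => /andP[_ h].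
    by rewrite ltW // addrC.
  move=> hfin2; apply: infinite_nat.
  have -> : [set: nat] = `I_N `|` [set n | (N <= n)%N].
    apply/seteqP; split => n //= _; rewrite /setU /=.
    by case: (ltnP n N) => h; [left|right].
  by rewrite finite_setU; split => //; exact: finite_II.
Qed.
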